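(* Let $\mathcal H$ be an HDML model, $\varphi$ a formula, and $Q_n^f$ the filtration classes defined below. Then for every $n\in\mathbb N$, $Q_n^f$ is finite and $|Q_n^f|\le 2^{|\varphi|\cdot N_n}$, where $N_n=n!\cdot\sum_{k=0}^{n}\frac{2^k}{(n-k)!}$.
   Context: A cubical set consists of pairwise disjoint sets $Q_n$ ($n\in\mathbb N$), $Q=\bigcup_n Q_n$, and for $n\ge1$, $1\le i\le n$, maps $s_i,t_i:Q_n\to Q_{n-1}$ satisfying $\alpha_i\circ\beta_j=\beta_{j-1}\circ\alpha_i$ for $1\le i<j\le n$, $\alpha,\beta\in\{s,t\}$. An HDML model is $\mathcal H=(Q,\bar s,\bar t,l,V)$ with $l:Q_1\to\Sigma$ satisfying $l(s_i(q))=l(t_i(q))$ for $q\in Q_2$, $i\in\{1,2\}$, and valuation $V:Q\to 2^{AP}$. HDML formulas: $\varphi::=p\mid\bot\mid\varphi\to\varphi\mid\langle\mathsf s\rangle\varphi\mid\langle\mathsf t\rangle\varphi$. Satisfaction at $q\in Q_n$: $p$ iff $p\in V(q)$; $\bot$ never; $\to$ classical; $\langle\mathsf s\rangle\psi$ iff some $q'\in Q_{n+1}$ and $1\le i\le n+1$ have $s_i(q')=q$ and $q'\models\psi$; $\langle\mathsf t\rangle\psi$ iff some $1\le i\le n$ has $t_i(q)\models\psi$. $|\varphi|$ is the number of occurrences of $\to$, modalities, atomic propositions and $\bot$ in $\varphi$; $\mathcal C(\varphi)$ is the set of subformulas of $\varphi$. For $q,q'$ of the same dimension, $q\equiv q'$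 iff they satisfy the same formulas of $\mathcal C(\varphi)$. For $q\in Q_0$, $[q]=\{q'\in Q_0:q\equiv q'\}$; for $q\in Q_n$, $n\ge1$, $[q]=\{q'\in Q_n:q\equiv q'$, $t_i(q')\in[t_i(q)]$, $s_i(q')\in[s_i(q)]$ for all $1\le i\le n\}$; $Q_n^f=\{[q]:q\in Q_n\}$. *)

(* Defs.v *)
From Stdlib Require Import List.
From mathcomp Require Import all_boot.
Set Implicit Arguments. Unset Strict Implicit. Unset Printing Implicit Defensive.

Inductive formula (AP : Type) : Type :=
  | FAtom of AP
  | FBot
  | FImp of formula AP & formula AP
  | FDiaS of formula AP
  | FDiaT of formula AP.
Arguments FBot {AP}.

Fixpoint fsize AP (f : formula AP) : nat :=
  match f with
  | FAtom _ => 1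
  | FBot => 1
  | FImp a b => (fsize a + fsize b).+1
  | FDiaS a => (fsize a).+1
  | FDiaT a => (fsize a).+1
  end.

Fixpoint subformulas AP (f : formula AP) : list (formula AP) :=
  f :: match f with
       | FAtom _ | FBot => nil
       | FImp a b => subformulas a ++ subformulas b
       | FDiaS a | FDiaT a => subformulas a
       end.

(* Q n is the set Q_n of n-cells (the Q_n are disjoint since
   they are distinct types).  s n i, t n i : Q_{n+1} -> Q_n are the face
   maps s_i, t_i with the paper's 1-based index i, meaningful for
   1 <= i <= n+1 (values at other indices are irrelevant: they are never
   used by the axioms, the semantics or the filtration). *)
Record hdml_model (Sigma AP : Type) := HDML {
  Q : nat -> Type;
  sface : forall n : nat, nat -> Q n.+1 -> Q n;
  tface : forall n : nat, nat -> Q n.+1 -> Q n;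
  (* cubical identities: alpha_i o beta_j = beta_{j-1} o alpha_i, i < j,
     on Q_{n+2} (so 1 <= i < j <= n+2) *)
  cubical : forall (a b : bool) (n i j : nat) (q : Q n.+2),
      1 <= i -> i < j -> j <= n.+2 ->
      (if a then @sface else @tface) n i ((if b then @sface else @tface) n.+1 j q)
      = (if b then @sface else @tface) n j.-1 ((if a then @sface else @tface) n.+1 i q);
  label : Q 1 -> Sigma;
  label_ax : forall (q : Q 2) (i : nat), 1 <= i <= 2 ->
      label (@sface 1 i q) = label (@tface 1 i q);
  val : forall n : nat, Q n -> AP -> Prop
}.
Arguments Q {Sigma AP}.
Arguments sface {Sigma AP} h {n}.
Arguments tface {Sigma AP} h {n}.
Arguments val {Sigma AP} h {n}.

Fixpoint sat Sigma AP (H : hdml_model Sigma AP) (f : formula AP)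
  : forall n : nat, Q H n -> Prop :=
  match f with
  | FAtom p => fun n q => val H q p
  | FBot => fun _ _ => False
  | FImp a b => fun n q => @sat Sigma AP H a n q -> @sat Sigma AP H b n q
  | FDiaS a => fun n q =>
      exists (q' : Q H n.+1) (i : nat),
        1 <= i <= n.+1 /\ sface H i q' = q /\ @sat Sigma AP H a n.+1 q'
  | FDiaT a => fun n =>
      match n return Q H n -> Prop with
      | 0 => fun _ => False
      | m.+1 => fun q => exists i : nat, 1 <= i <= m.+1 /\ @sat Sigma AP H a m (tface H i q)
      end
  end.
Arguments sat {Sigma AP} H f {n}.

Definition fequiv Sigma AP (H : hdml_model Sigma AP) (phi : formula AP)
  (n : nat) (q q' : Q H n) : Prop :=
  forall psi, In psi (subformulas phi) -> (sat H psi q <-> sat H psi q').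
Arguments fequiv {Sigma AP} H phi {n}.

Fixpoint fclass Sigma AP (H : hdml_model Sigma AP) (phi : formula AP)
  (n : nat) : Q H n -> Q H n -> Prop :=
  match n return Q H n -> Q H n -> Prop with
  | 0 => fun q q' => fequiv H phi q q'
  | m.+1 => fun q q' => fequiv H phi q q' /\
      forall i, 1 <= i <= m.+1 ->
        @fclass Sigma AP H phi m (tface H i q) (tface H i q') /\
        @fclass Sigma AP H phi m (sface H i q) (sface H i q')
  end.
Arguments fclass {Sigma AP} H phi n.

Definition Qf {Sigma AP} (H : hdml_model Sigma AP) (phi : formula AP) (n : nat)
  (S : Q H n -> Prop) : Prop :=
  exists q : Q H n, S = fclass H phi n q.
Arguments Qf {Sigma AP} H phi n.

Definition finite_card_le (A : Type) (P : A -> Prop) (k : nat) : Prop :=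
  exists L : list A, length L <= k /\ forall a, P a -> In a L.

(* N_n = n! * sum_{k=0}^n 2^k/(n-k)!  =  sum_k 2^k * (n!/(n-k)!)  (exact division) *)
Definition Nbound (n : nat) : nat :=
  \sum_(k < n.+1) 2 ^ k * (n`! %/ (n - k)`!).

(* Main.v *)
Require Import Defs.
From Stdlib Require Import List.
From mathcomp Require Import all_boot.
From Stdlib Require Import ClassicalEpsilon FunctionalExtensionality PropExtensionality.
Set Implicit Arguments. Unset Strict Implicit.

Lemma fact_dvd m n : m <= n -> m`! %| n`!.
Proof.
elim: n => [|n IH]; first by rewrite leqn0 => /eqP ->.
rewrite leq_eqVlt => /orP [/eqP -> //|]; rewrite ltnS => /IH h.
by rewrite factS dvdn_mull.
Qed.

Lemma Nbound0 : Nbound 0 = 1.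
Proof. by rewrite /Nbound big_ord_recl big_ord0. Qed.

Lemma NboundS n : Nbound n.+1 = (2 * n.+1 * Nbound n).+1.
Proof.
rewrite /Nbound big_ord_recl /= subn0 divnn fact_gt0 mul1n add1n; congr S.
rewrite big_distrr /=; apply: eq_bigr => j _.
rewrite /bump /= add1n subSS expnS factS.
have hd : (n - j)`! %| n`! by apply: fact_dvd; apply: leq_subr.
rewrite -muln_divA //; set x := (n`! %/ _); rewrite !mulnA; congr (_ * x); by rewrite -!mulnA (mulnC (2^j)).
Qed.

Lemma In_nth_ex (A : Type) (L : list A) a : In a L ->
  exists i, i < size L /\ forall d, nth d L i = a.
Proof.
elim: L => [//|b L IH] /= [->|h]; first by exists 0.
by case: (IH h) => i [hi hn]; exists i.+1.
Qed.

Lemma nth_indep (A : Type) (L : list A) i d d' : i < size L -> nth d L i = nth d' L i.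
Proof. elim: L i => [//|b L IH] [|i] //= /IH; apply. Qed.

Lemma length_size (A : Type) (L : list A) : length L = size L.
Proof. by elim: L => //= a L ->. Qed.

Lemma key_reps_seq (A : Type) (K : eqType) (f : A -> K) (s : seq K) :
  exists LA : list A, size LA <= size s /\
    forall a, f a \in s -> exists a', In a' LA /\ f a = f a'.
Proof.
elim: s => [|k s [LA [hs hLA]]]; first by exists nil.
case: (classic (exists a, f a = k)) => [[a0 ha0]|hn].
- exists (a0 :: LA); split => //= a; rewrite in_cons => /orP [/eqP ->|/hLA [a' [h1 h2]]].
  + by exists a0; split; [left|].
  + by exists a'; split; [right|].
- exists LA; split; first by apply: leq_trans hs _.
  move=> a; rewrite in_cons => /orP [/eqP h|]; last exact: hLA.
  by exfalso; apply: hn; exists a.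
Qed.

Lemma key_reps (A : Type) (K : finType) (f : A -> K) :
  exists LA : list A, size LA <= #|K| /\ forall a, exists a', In a' LA /\ f a = f a'.
Proof.
have [LA [h1 h2]] := key_reps_seq f (enum K).
exists LA; split; first by rewrite cardE.
by move=> a; apply: h2; rewrite mem_enum.
Qed.


Lemma fequiv_refl Sigma AP (H : hdml_model Sigma AP) phi n (q : Q H n) : fequiv H phi q q.
Proof. by move=> psi _. Qed.

Lemma fclass_refl Sigma AP (H : hdml_model Sigma AP) phi n (q : Q H n) : fclass H phi n q q.
Proof.
elim: n q => [|n IH] q /=; first exact: fequiv_refl.
by split; [exact: fequiv_refl| move=> i _; split; apply: IH].
Qed.

Lemma fclass_sym Sigma AP (H : hdml_model Sigma AP) phi n (q q' : Q H n) :
  fclass H phi n q q' -> fclass H phi n q' q.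
Proof.
elim: n q q' => [|n IH] q q' /=.
- by move=> h psi hp; split => /(h psi hp).
- move=> [h1 h2]; split; first by move=> psi hp; split => /(h1 psi hp).
  by move=> i hi; case: (h2 i hi) => ? ?; split; apply: IH.
Qed.

Lemma fclass_trans Sigma AP (H : hdml_model Sigma AP) phi n (q q' q'' : Q H n) :
  fclass H phi n q q' -> fclass H phi n q' q'' -> fclass H phi n q q''.
Proof.
elim: n q q' q'' => [|n IH] q q' q'' /=.
- by move=> h h' psi hp; split => [/(h psi hp)/(h' psi hp)|/(h' psi hp)/(h psi hp)].
- move=> [h1 h2] [h1' h2']; split.
  + by move=> psi hp; split => [/(h1 psi hp)/(h1' psi hp)|/(h1' psi hp)/(h1 psi hp)].
  + move=> i hi; case: (h2 i hi) => ? ?; case: (h2' i hi) => ? ?.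
    by split; apply: IH; eassumption.
Qed.

Definition dec (P : Prop) : bool := if excluded_middle_informative P then true else false.

Lemma decE (P Q : Prop) : dec P = dec Q -> (P <-> Q).
Proof.
rewrite /dec; case: (excluded_middle_informative P); case: (excluded_middle_informative Q) => //.
Qed.

Lemma fsize_subs AP (phi : formula AP) : size (subformulas phi) = fsize phi.
Proof. by elim: phi => //= [a IHa b IHb|a IHa|a IHa]; rewrite ?size_cat ?IHa ?IHb. Qed.

Definition reps Sigma AP (H : hdml_model Sigma AP) phi n (L : list (Q H n)) :=
  forall q, exists q', In q' L /\ fclass H phi n q q'.

Lemma step Sigma AP (H : hdml_model Sigma AP) phi n (L : list (Q H n)) :
  reps phi L ->
  exists L' : list (Q H n.+1),
    size L' <= 2 ^ fsize phi * (size L * size L) ^ n.+1 /\ reps phi L'.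
Proof.
move=> hL.
have exidx : forall x : Q H n, exists i : 'I_(size L), fclass H phi n x (nth x L i).
  move=> x; case: (hL x) => q' [hin hc].
  case: (In_nth_ex hin) => i [hi hn]; exists (Ordinal hi); by rewrite /= hn.
pose idx x := proj1_sig (constructive_indefinite_description _ (exidx x)).
have idxP : forall x, fclass H phi n x (nth x L (idx x)).
  by move=> x; rewrite /idx; case: constructive_indefinite_description.
pose fs := size (subformulas phi).
pose key (q : Q H n.+1) :
  ({ffun 'I_fs -> bool} * {ffun 'I_n.+1 -> 'I_(size L) * 'I_(size L)})%type :=
  ([ffun j : 'I_fs => dec (sat H (nth FBot (subformulas phi) j) q)],
   [ffun i : 'I_n.+1 => (idx (tface H i.+1 q), idx (sface H i.+1 q))]).
have [L' [hs hr]] := key_reps key.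
exists L'; split.
  apply: (leq_trans hs); rewrite card_prod !card_ffun card_prod !card_ord card_bool.
  by rewrite /fs fsize_subs.
move=> q; case: (hr q) => q' [hin hk]; exists q'; split => //=.
have [ha hb] : key q = key q' by [].
rewrite /key in ha hb; case: ha => ha; case: hb => hb.
split.
- move=> psi hp; case: (In_nth_ex hp) => j [hj hn].
  have := congr1 (fun g : {ffun 'I_fs -> bool} => g (Ordinal hj)) ha; rewrite !ffunE /= (hn FBot).
  exact: decE.
- move=> i /andP [i1 i2].
  have hi : i.-1 < n.+1 by rewrite prednK.
  have := congr1 (fun g : {ffun 'I_n.+1 -> 'I_(size L) * 'I_(size L)} => g (Ordinal hi)) hb; rewrite !ffunE /= prednK //.
  case=> et es.
  have hlt : forall x : Q H n, idx x < size L by move=> x; exact: ltn_ord.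
  have comb : forall x y : Q H n, idx x = idx y -> fclass H phi n x y.
    move=> x y exy; apply: (fclass_trans (idxP x)); apply: fclass_sym.
    by rewrite exy (nth_indep x y (hlt y)); apply: idxP.
  by split; apply: comb.
Qed.

Lemma reps_bound Sigma AP (H : hdml_model Sigma AP) phi n :
  exists L : list (Q H n), size L <= 2 ^ (fsize phi * Nbound n) /\ reps phi L.
Proof.
elim: n => [|n [L [hs hL]]].
- pose fs := size (subformulas phi).
  pose key (q : Q H 0) : {ffun 'I_fs -> bool} :=
    [ffun j : 'I_fs => dec (sat H (nth FBot (subformulas phi) j) q)].
  have [L' [hs hr]] := key_reps key.
  exists L'; split.
    by apply: (leq_trans hs); rewrite card_ffun card_ord card_bool Nbound0 muln1 /fs fsize_subs.
  move=> q; case: (hr q) => q' [hin hk]; exists q'; split => //=.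
  move=> psi hp; case: (In_nth_ex hp) => j [hj hn].
  have := congr1 (fun g : {ffun 'I_fs -> bool} => g (Ordinal hj)) hk; rewrite !ffunE /= (hn FBot).
  exact: decE.
- have [L' [hs' hr]] := step hL.
  exists L'; split => //; apply: (leq_trans hs').
  set F := fsize phi; set N := Nbound n.
  have h1 : (size L * size L) ^ n.+1 <= (2 ^ (F * N) * 2 ^ (F * N)) ^ n.+1.
    by rewrite leq_exp2r //; apply: leq_mul.
  apply: (leq_trans (leq_mul (leqnn _) h1)).
  rewrite -expnD -expnM -expnD leq_exp2l // NboundS.
  rewrite [in X in _ <= X]mulnS leq_add2l addnn -mul2n.
  rewrite mulnC !mulnA -/N (mulnC n.+1 2) -[F * 2 * n.+1]mulnA [F * (2 * n.+1)]mulnC.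
  by [].
Qed.

Theorem mainTheorem4 (Sigma AP : Type) (H : hdml_model Sigma AP)
  (phi : formula AP) (n : nat) :
  finite_card_le (Qf H phi n) (2 ^ (fsize phi * Nbound n)).
Proof.
have [L [hs hL]] := reps_bound H phi n.
exists (List.map (fclass H phi n) L); split.
  by rewrite List.length_map length_size.
move=> S [q ->]; case: (hL q) => q' [hin hc].
have -> : fclass H phi n q = fclass H phi n q'.
  apply: functional_extensionality => x; apply: propositional_extensionality; split.
  - by move=> h; apply: fclass_trans (fclass_sym hc) h.
  - by move=> h; apply: fclass_trans hc h.
exact: in_map.
Qed.
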